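(* Let $\sigma\in\mathbf{SL}(2,\mathbb{C})$, $z\in\mathbb{C}$, $\lambda>0$, $g=n[z]a[\lambda]$ and $P=z+\lambda j\in\mathbb{H}^3$. Then \[\Phi_{T(\sigma g)}=B\circ R(d\sigma,P)\circ B,\qquad B=\begin{pmatrix}1&0&0\\0&1&0\\0&0&-1\end{pmatrix}.\]
   Context: $\mathbb{H}^3=\{z+\lambda j:z\in\mathbb{C},\lambda>0\}\subset\mathbb{R}^3$ with $\mathbf{SL}(2,\mathbb{C})$ acting by $\begin{pmatrix}a&b\\c&d\end{pmatrix}(z+\lambda j)=\frac{(az+b)(\bar c\bar z+\bar d)+a\bar c\lambda^2}{|cz+d|^2+|c|^2\lambda^2}+\frac{\lambda}{|cz+d|^2+|c|^2\lambda^2}j$; $\mathrm{Im}(z+\lambda j):=\lambda$. $n[z]=\begin{pmatrix}1&z\\0&1\end{pmatrix}$, $a[\mu]=\begin{pmatrix}\sqrt\mu&0\\0&1/\sqrt\mu\end{pmatrix}$ ($\mu>0$). Every $g\in\mathbf{SL}(2,\mathbb{C})$ has a unique Iwasawa decomposition $g=n[w]a[\mu]K$ with $w\in\mathbb{C},\mu>0,K\in\mathbf{SU}(2)$; $T(g):=K$. $\Phi:\mathbf{SU}(2)\to\mathbf{SO}(3)$ is the double cover given, for $A=\begin{pmatrix}\alpha&\beta\\-\bar\beta&\bar\alpha\end{pmatrix}$, by $\Phi_A=\begin{pmatrix}\mathrm{Re}(\alpha^2-\beta^2)&-\mathrm{Im}(\alpha^2+\beta^2)&2\mathrm{Re}(\alpha\beta)\\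 \mathrm{Im}(\alpha^2-\beta^2)&\mathrm{Re}(\alpha^2+\beta^2)&2\mathrm{Im}(\alpha\beta)\\ -2\mathrm{Re}(\bar\alpha\beta)&2\mathrm{Im}(\alpha\bar\beta)&|\alpha|^2-|\beta|^2\end{pmatrix}$. For $\sigma\in\mathbf{SL}(2,\mathbb{C})$ and $P=z+\lambda j$, $R(d\sigma,P)$ is the linear map of $\mathbb{R}^3$ defined by $R(d\sigma,P)v:=\frac{\lambda}{\mathrm{Im}\,\sigma P}\,d\sigma_P(v)$, where $d\sigma_P$ is the differential at $P$ of the map $\sigma:\mathbb{H}^3\to\mathbb{H}^3\subset\mathbb{R}^3$ (tangent spaces identified with $\mathbb{R}^3$), written as a matrix in the basis $e_1,e_2,e_3$ (directions $x,y,\lambda$). *)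

(* Defs.v *)
From Stdlib Require Import Reals Lra.
Open Scope R_scope.

Record Cx := mkC { re : R; im : R }.
Definition Cadd (u v : Cx) : Cx := mkC (re u + re v) (im u + im v).
Definition Copp (u : Cx) : Cx := mkC (- re u) (- im u).
Definition Cmul (u v : Cx) : Cx :=
  mkC (re u * re v - im u * im v) (re u * im v + im u * re v).
Definition Cconj (u : Cx) : Cx := mkC (re u) (- im u).
Definition CR (r : R) : Cx := mkC r 0.
Definition C0 : Cx := CR 0.
Definition C1 : Cx := CR 1.
Definition Cnorm2 (u : Cx) : R := re u * re u + im u * im u.
Definition Cscal (r : R) (u : Cx) : Cx := mkC (r * re u) (r * im u).

Record M2 := mkM2 { ma : Cx; mb : Cx; mc : Cx; md : Cx }.
Definition M2mul (X Y : M2) : M2 :=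
  mkM2 (Cadd (Cmul (ma X) (ma Y)) (Cmul (mb X) (mc Y)))
       (Cadd (Cmul (ma X) (mb Y)) (Cmul (mb X) (md Y)))
       (Cadd (Cmul (mc X) (ma Y)) (Cmul (md X) (mc Y)))
       (Cadd (Cmul (mc X) (mb Y)) (Cmul (md X) (md Y))).
Definition M2det (X : M2) : Cx := Cadd (Cmul (ma X) (md X)) (Copp (Cmul (mb X) (mc X))).
Definition M2adj (X : M2) : M2 :=
  mkM2 (Cconj (ma X)) (Cconj (mc X)) (Cconj (mb X)) (Cconj (md X)).
Definition M2id : M2 := mkM2 C1 C0 C0 C1.

Definition in_SL2C (X : M2) : Prop := M2det X = C1.
Definition in_SU2 (X : M2) : Prop := M2mul X (M2adj X) = M2id /\ M2det X = C1.

Definition nmat (z : Cx) : M2 := mkM2 C1 z C0 C1.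
Definition amat (mu : R) : M2 := mkM2 (CR (sqrt mu)) C0 C0 (CR (/ sqrt mu)).

(* g = n[w] a[mu] K is an Iwasawa decomposition of g (w in C, mu > 0, K in SU(2));
   T(g) is the K of the (unique) such decomposition. *)
Definition iwasawa (g : M2) (w : Cx) (mu : R) (K : M2) : Prop :=
  0 < mu /\ in_SU2 K /\ g = M2mul (M2mul (nmat w) (amat mu)) K.

Record V3 := mkV3 { v1 : R; v2 : R; v3 : R }.
Definition V3add (u v : V3) : V3 := mkV3 (v1 u + v1 v) (v2 u + v2 v) (v3 u + v3 v).
Definition V3sub (u v : V3) : V3 := mkV3 (v1 u - v1 v) (v2 u - v2 v) (v3 u - v3 v).
Definition V3norm (u : V3) : R := sqrt (v1 u * v1 u + v2 u * v2 u + v3 u * v3 u).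
Definition V3nth (u : V3) (i : nat) : R :=
  match i with 0%nat => v1 u | 1%nat => v2 u | _ => v3 u end.

(* 3x3 matrices, entries indexed by i j in {0,1,2} (row, column) *)
Definition Mat3 := nat -> nat -> R.
Definition mat3_apply (M : Mat3) (u : V3) : V3 :=
  mkV3 (M 0%nat 0%nat * v1 u + M 0%nat 1%nat * v2 u + M 0%nat 2%nat * v3 u)
       (M 1%nat 0%nat * v1 u + M 1%nat 1%nat * v2 u + M 1%nat 2%nat * v3 u)
       (M 2%nat 0%nat * v1 u + M 2%nat 1%nat * v2 u + M 2%nat 2%nat * v3 u).
Definition mat3_mul (M N : Mat3) : Mat3 :=
  fun i j => M i 0%nat * N 0%nat j + M i 1%nat * N 1%nat j + M i 2%nat * N 2%nat j.
Definition Bmat : Mat3 := fun i j =>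
  match i, j with
  | 0%nat, 0%nat => 1 | 1%nat, 1%nat => 1 | 2%nat, 2%nat => -1 | _, _ => 0 end.

Definition Phi (A : M2) : Mat3 :=
  let al := ma A in let be := mb A in
  let al2 := Cmul al al in let be2 := Cmul be be in
  let ab := Cmul al be in
  fun i j =>
  match i, j with
  | 0%nat, 0%nat => re (Cadd al2 (Copp be2))
  | 0%nat, 1%nat => - im (Cadd al2 be2)
  | 0%nat, 2%nat => 2 * re ab
  | 1%nat, 0%nat => im (Cadd al2 (Copp be2))
  | 1%nat, 1%nat => re (Cadd al2 be2)
  | 1%nat, 2%nat => 2 * im ab
  | 2%nat, 0%nat => - 2 * re (Cmul (Cconj al) be)
  | 2%nat, 1%nat => 2 * im (Cmul al (Cconj be))
  | 2%nat, 2%nat => Cnorm2 al - Cnorm2 be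
  | _, _ => 0
  end.

(* point z + lambda j  <->  mkV3 (re z) (im z) lambda *)
Definition hpoint (z : Cx) (l : R) : V3 := mkV3 (re z) (im z) l.

Definition act (s : M2) (P : V3) : V3 :=
  let z := mkC (v1 P) (v2 P) in
  let l := v3 P in
  let a := ma s in let b := mb s in let c := mc s in let d := md s in
  let den := Cnorm2 (Cadd (Cmul c z) d) + Cnorm2 c * (l * l) in
  let num := Cadd (Cmul (Cadd (Cmul a z) b) (Cadd (Cmul (Cconj c) (Cconj z)) (Cconj d)))
                  (Cscal (l * l) (Cmul a (Cconj c))) in
  mkV3 (re num / den) (im num / den) (l / den).

Definition Imh (P : V3) : R := v3 P.

Definition is_differential (f : V3 -> V3) (P : V3) (L : Mat3) : Prop :=
  forall eps, 0 < eps -> exists delta, 0 < delta /\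
    forall h, 0 < V3norm h < delta ->
      V3norm (V3sub (V3sub (f (V3add P h)) (f P)) (mat3_apply L h)) <= eps * V3norm h.

Definition is_R (s : M2) (P : V3) (M : Mat3) : Prop :=
  exists L, is_differential (act s) P L /\
    forall i j, (i < 3)%nat -> (j < 3)%nat ->
      M i j = Imh P / Imh (act s P) * L i j.

(* Main.v *)
Require Import Defs.
From Stdlib Require Import Reals.
Open Scope R_scope.
From Stdlib Require Import Lra Psatz.
From Coquelicot Require Import Coquelicot.
Require Import Defs.
Open Scope R_scope.
Set Bullet Behavior "Strict Subproofs".

Definition U := (R * (R * R))%type.

Section FD.
Variable p : U.

Lemma fd_x : filterdiff (fun q : U => fst q) (locally p) (fun h => fst h).
Proof. apply filterdiff_linear, is_linear_fst. Qed.
Lemma fd_y : filterdiff (fun q : U => fst (snd q)) (locally p) (fun h => fst (snd h)).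
Proof. apply filterdiff_linear. apply (is_linear_comp (fun t:U => snd t) (fun t : R*R => fst t)).
 apply is_linear_snd. apply is_linear_fst. Qed.
Lemma fd_l : filterdiff (fun q : U => snd (snd q)) (locally p) (fun h => snd (snd h)).
Proof. apply filterdiff_linear. apply (is_linear_comp (fun t:U => snd t) (fun t : R*R => snd t)).
 apply is_linear_snd. apply is_linear_snd. Qed.
Lemma fd_c (c : R) : filterdiff (fun q : U => c) (locally p) (fun h => 0).
Proof. apply (filterdiff_const (V:=R_NormedModule) c). Qed.
Lemma fd_plus f g lf lg : filterdiff f (locally p) lf -> filterdiff g (locally p) lg ->
  filterdiff (fun q : U => f q + g q) (locally p) (fun h => lf h + lg h).
Proof. intros. apply (filterdiff_plus_fct (V:=R_NormedModule) f g lf lg); auto. Qed.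
Lemma fd_minus f g lf lg : filterdiff f (locally p) lf -> filterdiff g (locally p) lg ->
  filterdiff (fun q : U => f q - g q) (locally p) (fun h => lf h - lg h).
Proof. intros. apply (filterdiff_minus_fct (V:=R_NormedModule) f g lf lg); auto. Qed.
Lemma fd_mult f g lf lg : filterdiff f (locally p) lf -> filterdiff g (locally p) lg ->
  filterdiff (fun q : U => f q * g q) (locally p) (fun h => lf h * g p + f p * lg h).
Proof. intros. apply (filterdiff_mult_fct (K:=R_AbsRing) f g p lf lg); auto. apply Rmult_comm. Qed.
Lemma fd_opp f lf : filterdiff f (locally p) lf ->
  filterdiff (fun q : U => - f q) (locally p) (fun h => - lf h).
Proof. intros. apply (filterdiff_opp_fct (V:=R_NormedModule) f lf); auto. Qed.
Lemma fd_inv f lf : filterdiff f (locally p) lf -> f p <> 0 ->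
  filterdiff (fun q : U => / f q) (locally p) (fun h => - lf h / (f p)^2).
Proof. intros H Hf.
  assert (Hd := is_derive_inv (fun y => y) (f p) 1 (is_derive_id _) Hf).
  eapply filterdiff_ext_lin.
  apply (filterdiff_comp' f (fun y => / y) p lf _ H Hd).
  intros h. simpl. unfold scal; simpl; unfold mult; simpl. field. auto. Qed.
End FD.
Lemma norm_U (h : U) : norm h = sqrt (fst h * fst h + fst (snd h) * fst (snd h) + snd (snd h) * snd (snd h)).
Proof. destruct h as [a [b c]]. simpl. unfold norm; simpl. unfold prod_norm; simpl.
  unfold norm; simpl. unfold prod_norm; simpl. unfold norm; simpl. unfold abs; simpl.
  rewrite !Rmult_1_r, sqrt_sqrt. f_equal. rewrite <- !Rabs_mult, !Rabs_right. ring.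
  all: try (apply Rle_ge; nra). nra.
Qed.

Lemma fd_bound (F : U -> R) p1 p2 p3 gx gy gl :
  filterdiff F (locally (p1,(p2,p3))) (fun h => gx*fst h + gy*fst(snd h) + gl*snd(snd h)) ->
  forall eps, 0 < eps -> exists delta, 0 < delta /\ forall h1 h2 h3,
   sqrt (h1*h1+h2*h2+h3*h3) < delta ->
   Rabs (F (p1+h1,(p2+h2,p3+h3)) - F (p1,(p2,p3)) - (gx*h1+gy*h2+gl*h3)) <= eps * sqrt (h1*h1+h2*h2+h3*h3).
Proof.
  intros [_ Hd] eps Heps.
  specialize (Hd (p1,(p2,p3)) (fun P H => H) (mkposreal eps Heps)).
  destruct Hd as [d Hd]. exists d. split. apply cond_pos.
  intros h1 h2 h3 Hh.
  assert (Hm : minus ((p1+h1,(p2+h2,p3+h3)) : U) (p1,(p2,p3)) = (h1,(h2,h3))).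
  { unfold minus, plus, opp; simpl. unfold plus, opp; simpl. unfold plus, opp; simpl.
    unfold prod_plus, prod_opp; simpl. unfold plus, opp; simpl. unfold prod_plus, prod_opp; simpl. unfold plus, opp; simpl. f_equal; [|f_equal]; ring. }
  assert (Hb : ball (p1,(p2,p3)) d ((p1+h1,(p2+h2,p3+h3)) : U)).
  { assert (Hs1: Rabs h1 < d). { eapply Rle_lt_trans; [|exact Hh]. rewrite <- sqrt_Rsqr_abs. apply sqrt_le_1_alt. unfold Rsqr; nra. }
    assert (Hs2: Rabs h2 < d). { eapply Rle_lt_trans; [|exact Hh]. rewrite <- sqrt_Rsqr_abs. apply sqrt_le_1_alt. unfold Rsqr; nra. }
    assert (Hs3: Rabs h3 < d). { eapply Rle_lt_trans; [|exact Hh]. rewrite <- sqrt_Rsqr_abs. apply sqrt_le_1_alt. unfold Rsqr; nra. }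
    split; [|split]; simpl; unfold ball; simpl; unfold AbsRing_ball, abs, minus, plus, opp; simpl;
    match goal with |- Rabs ?x < _ => first [replace x with h1 by ring | replace x with h2 by ring | replace x with h3 by ring] end; assumption. }
  specialize (Hd _ Hb). simpl in Hd. unfold minus, plus, opp in Hd; simpl in Hd. unfold prod_plus, prod_opp in Hd; simpl in Hd. unfold plus, opp in Hd; simpl in Hd.
  replace (p1 + h1 + - p1) with h1 in Hd by ring.
  replace (p2 + h2 + - p2) with h2 in Hd by ring.
  replace (p3 + h3 + - p3) with h3 in Hd by ring.
  match type of Hd with context [eps * norm ?x] =>
    assert (Ex : norm x = sqrt (h1*h1+h2*h2+h3*h3)); [|rewrite Ex in Hd] end.
  { unfold norm; simpl; unfold prod_norm; simpl. unfold prod_plus, prod_opp; simpl. unfold plus, opp; simpl.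
    unfold norm; simpl. unfold prod_norm; simpl. unfold norm; simpl. unfold abs; simpl.
    rewrite !Rmult_1_r, sqrt_sqrt. f_equal. rewrite <- !Rabs_mult, !Rabs_right. ring.
    all: try (apply Rle_ge; nra). nra. }
  replace (F (p1 + h1, (p2 + h2, p3 + h3)) - F (p1, (p2, p3)) - (gx * h1 + gy * h2 + gl * h3))
   with (F (p1 + h1, (p2 + h2, p3 + h3)) + - F (p1, (p2, p3)) + - (gx * h1 + gy * h2 + gl * h3)) by ring.
  exact Hd.
Qed.

Lemma fd_div p f g lf lg : filterdiff f (locally p) lf -> filterdiff g (locally p) lg -> g p <> 0 ->
  filterdiff (fun q : U => f q / g q) (locally p) (fun h => lf h * / g p + f p * (- lg h / (g p)^2)).
Proof. intros Hf Hg Hn. apply (fd_mult p f (fun q => / g q)); auto. apply fd_inv; auto. Qed.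

Ltac fd := lazymatch goal with
 | |- filterdiff (fun q => fst q) _ _ => apply fd_x
 | |- filterdiff (fun q => fst (snd q)) _ _ => apply fd_y
 | |- filterdiff (fun q => snd (snd q)) _ _ => apply fd_l
 | |- filterdiff (fun q => @?f q + @?g q) _ _ => eapply (fd_plus _ f g); [fd|fd]
 | |- filterdiff (fun q => @?f q - @?g q) _ _ => eapply (fd_minus _ f g); [fd|fd]
 | |- filterdiff (fun q => @?f q * @?g q) _ _ => eapply (fd_mult _ f g); [fd|fd]
 | |- filterdiff (fun q => - @?f q) _ _ => eapply (fd_opp _ f); fd
 | |- filterdiff (fun q => @?f q / @?g q) _ _ => eapply (fd_div _ f g); [fd|fd|]
 | |- filterdiff (fun q => ?c) _ _ => apply fd_c
 end.


Section Deriv.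
Variables ar ai br bi cr ci dr di p1 p2 p3 : R.
Hypothesis HDr : ar*dr - ai*di - (br*cr - bi*ci) = 1.
Hypothesis HDi : ar*di + ai*dr - (br*ci + bi*cr) = 0.
Let ur := cr*p1 - ci*p2 + dr.
Let ui := cr*p2 + ci*p1 + di.
Let l := p3.
Let D := ur*ur + ui*ui + (cr*cr+ci*ci)*(l*l).
Hypothesis HD : D <> 0.
Let S := mkM2 (mkC ar ai) (mkC br bi) (mkC cr ci) (mkC dr di).
Let E00 := ur*ur-ui*ui-l*l*(cr*cr-ci*ci).
Let E01 := 2*ur*ui+2*l*l*cr*ci.
Let E02 := 2*l*(ur*cr-ui*ci).
Let E10 := -2*ur*ui+2*l*l*cr*ci.
Let E11 := ur*ur-ui*ui+l*l*(cr*cr-ci*ci).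
Let E12 := -2*l*(ur*ci+ui*cr).
Let E20 := -2*l*(ur*cr+ui*ci).
Let E21 := 2*l*(ur*ci-ui*cr).
Let E22 := ur*ur+ui*ui-l*l*(cr*cr+ci*ci).

Lemma deriv1 : filterdiff (fun q : U => v1 (act S (mkV3 (fst q) (fst (snd q)) (snd (snd q)))))
  (locally (p1,(p2,p3))) (fun h => E00/(D*D) * fst h + E01/(D*D) * fst (snd h) + E02/(D*D) * snd (snd h)).
Proof.
  eapply filterdiff_ext_lin. unfold act, S, Cnorm2, Cadd, Cmul, Cconj, Cscal; simpl. fd.
  - simpl. exact HD.
  - intros [h1 [h2 h3]]. simpl.
    transitivity (((ar*dr - ai*di - (br*cr - bi*ci)) * (E00*h1+E01*h2+E02*h3) - (ar*di + ai*dr - (br*ci + bi*cr)) * (E10*h1+E11*h2+E12*h3))/(D*D)).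
    + unfold E00, E01, E02, E10, E11, E12, D, ur, ui, l. field. exact HD.
    + rewrite HDr, HDi. field. exact HD.
Qed.

Lemma deriv2 : filterdiff (fun q : U => v2 (act S (mkV3 (fst q) (fst (snd q)) (snd (snd q)))))
  (locally (p1,(p2,p3))) (fun h => E10/(D*D) * fst h + E11/(D*D) * fst (snd h) + E12/(D*D) * snd (snd h)).
Proof.
  eapply filterdiff_ext_lin. unfold act, S, Cnorm2, Cadd, Cmul, Cconj, Cscal; simpl. fd.
  - simpl. exact HD.
  - intros [h1 [h2 h3]]. simpl.
    transitivity (((ar*dr - ai*di - (br*cr - bi*ci)) * (E10*h1+E11*h2+E12*h3) + (ar*di + ai*dr - (br*ci + bi*cr)) * (E00*h1+E01*h2+E02*h3))/(D*D)).
    + unfold E00, E01, E02, E10, E11, E12, D, ur, ui, l. field. exact HD.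
    + rewrite HDr, HDi. field. exact HD.
Qed.

Lemma deriv3 : filterdiff (fun q : U => v3 (act S (mkV3 (fst q) (fst (snd q)) (snd (snd q)))))
  (locally (p1,(p2,p3))) (fun h => E20/(D*D) * fst h + E21/(D*D) * fst (snd h) + E22/(D*D) * snd (snd h)).
Proof.
  eapply filterdiff_ext_lin. unfold act, S, Cnorm2, Cadd, Cmul, Cconj, Cscal; simpl. fd.
  - simpl. exact HD.
  - intros [h1 [h2 h3]]. simpl.
    unfold E20, E21, E22, D, ur, ui, l. field. exact HD.
Qed.
End Deriv.

Lemma sqrt3_le a b c : sqrt (a*a+b*b+c*c) <= Rabs a + Rabs b + Rabs c.
Proof.
  rewrite <- (sqrt_Rsqr (Rabs a + Rabs b + Rabs c)).
  2: generalize (Rabs_pos a) (Rabs_pos b) (Rabs_pos c); lra.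
  apply sqrt_le_1_alt. unfold Rsqr.
  assert (Ha : Rabs a * Rabs a = a * a) by (rewrite <- Rabs_mult; apply Rabs_right; nra).
  assert (Hb : Rabs b * Rabs b = b * b) by (rewrite <- Rabs_mult; apply Rabs_right; nra).
  assert (Hc : Rabs c * Rabs c = c * c) by (rewrite <- Rabs_mult; apply Rabs_right; nra).
  generalize (Rabs_pos a) (Rabs_pos b) (Rabs_pos c). nra.
Qed.

Lemma is_diff_from3 (f : V3 -> V3) p1 p2 p3 (L : Mat3) :
  filterdiff (fun q : U => v1 (f (mkV3 (fst q) (fst (snd q)) (snd (snd q))))) (locally (p1,(p2,p3)))
    (fun h => L 0%nat 0%nat * fst h + L 0%nat 1%nat * fst (snd h) + L 0%nat 2%nat * snd (snd h)) ->
  filterdiff (fun q : U => v2 (f (mkV3 (fst q) (fst (snd q)) (snd (snd q))))) (locally (p1,(p2,p3)))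
    (fun h => L 1%nat 0%nat * fst h + L 1%nat 1%nat * fst (snd h) + L 1%nat 2%nat * snd (snd h)) ->
  filterdiff (fun q : U => v3 (f (mkV3 (fst q) (fst (snd q)) (snd (snd q))))) (locally (p1,(p2,p3)))
    (fun h => L 2%nat 0%nat * fst h + L 2%nat 1%nat * fst (snd h) + L 2%nat 2%nat * snd (snd h)) ->
  is_differential f (mkV3 p1 p2 p3) L.
Proof.
  intros H1 H2 H3 eps Heps.
  assert (He3 : 0 < eps/3) by lra.
  destruct (fd_bound _ _ _ _ _ _ _ H1 _ He3) as [d1 [Hd1 B1]].
  destruct (fd_bound _ _ _ _ _ _ _ H2 _ He3) as [d2 [Hd2 B2]].
  destruct (fd_bound _ _ _ _ _ _ _ H3 _ He3) as [d3 [Hd3 B3]].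
  exists (Rmin d1 (Rmin d2 d3)). split.
  { apply Rmin_pos; auto. apply Rmin_pos; auto. }
  intros [h1 h2 h3] [Hpos Hlt]. unfold V3norm in *. simpl in *.
  assert (L1 : sqrt (h1*h1+h2*h2+h3*h3) < d1).
  { eapply Rlt_le_trans; [exact Hlt|]. apply Rmin_l. }
  assert (L2 : sqrt (h1*h1+h2*h2+h3*h3) < d2).
  { eapply Rlt_le_trans; [exact Hlt|]. eapply Rle_trans; [apply Rmin_r|apply Rmin_l]. }
  assert (L3 : sqrt (h1*h1+h2*h2+h3*h3) < d3).
  { eapply Rlt_le_trans; [exact Hlt|]. eapply Rle_trans; [apply Rmin_r|apply Rmin_r]. }
  specialize (B1 h1 h2 h3 L1). specialize (B2 h1 h2 h3 L2). specialize (B3 h1 h2 h3 L3).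
  simpl in B1, B2, B3.
  eapply Rle_trans; [apply sqrt3_le|]. unfold V3add; simpl. lra.
Qed.

Lemma lincomb x y e : x - y = e -> e = 0 -> x = y.
Proof. intros; lra. Qed.

Lemma su2_struct a1 a2 b1 b2 c1 c2 d1 d2 :
  a1*a1+a2*a2+b1*b1+b2*b2 = 1 ->
  c1*a1 + c2*a2 + d1*b1 + d2*b2 = 0 ->
  c2*a1 - c1*a2 + d2*b1 - d1*b2 = 0 ->
  a1*d1 - a2*d2 - (b1*c1 - b2*c2) = 1 ->
  a1*d2 + a2*d1 - (b1*c2 + b2*c1) = 0 ->
  a1 = d1 /\ a2 = - d2 /\ b1 = - c1 /\ b2 = c2.
Proof.
  intros HN HEr HEi HDr HDi.
  set (N := a1*a1+a2*a2+b1*b1+b2*b2) in *.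
  set (Er := c1*a1 + c2*a2 + d1*b1 + d2*b2) in *.
  set (Ei := c2*a1 - c1*a2 + d2*b1 - d1*b2) in *.
  set (Dr := a1*d1 - a2*d2 - (b1*c1 - b2*c2)) in *.
  set (Di := a1*d2 + a2*d1 - (b1*c2 + b2*c1)) in *.
  assert (G1 : d1 - a1 = d1*(1-N) + (b1*Er - b2*Ei) + (a1*(Dr - 1) + a2*Di)) by (unfold N, Er, Ei, Dr, Di; ring).
  assert (G2 : d2 + a2 = d2*(1-N) + (b1*Ei + b2*Er) + (a1*Di - a2*(Dr-1))) by (unfold N, Er, Ei, Dr, Di; ring).
  assert (G3 : c1 + b1 = c1*(1-N) + (a1*Er - a2*Ei) - (b1*(Dr-1) + b2*Di)) by (unfold N, Er, Ei, Dr, Di; ring).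
  assert (G4 : c2 - b2 = c2*(1-N) + (a1*Ei + a2*Er) - (b1*Di - b2*(Dr-1))) by (unfold N, Er, Ei, Dr, Di; ring).
  rewrite HN, HEr, HEi, HDr, HDi in *.
  repeat split; nra.
Qed.

Lemma den_pos ar ai br bi cr ci dr di x y s :
  ar*dr - ai*di - (br*cr - bi*ci) = 1 -> ar*di + ai*dr - (br*ci + bi*cr) = 0 -> 0 < s ->
  0 < (cr*x - ci*y + dr)*(cr*x - ci*y + dr) + (cr*y + ci*x + di)*(cr*y + ci*x + di) + (cr*cr+ci*ci)*((s*s)*(s*s)).
Proof.
  intros HDr HDi Hs.
  assert (Hs4 : 0 < (s*s)*(s*s)) by (apply Rmult_lt_0_compat; nra).
  destruct (Req_dec (cr*cr+ci*ci) 0) as [H0|H0].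
  - assert (cr = 0) by nra. assert (ci = 0) by nra. subst cr ci.
    assert (dr*dr + di*di > 0).
    { destruct (Req_dec dr 0); destruct (Req_dec di 0); try nra; subst; lra. }
    nra.
  - assert (0 < cr*cr+ci*ci) by nra. assert (0 < (cr*cr+ci*ci)*((s*s)*(s*s))) by (apply Rmult_lt_0_compat; auto). generalize (Rle_0_sqr (cr*x - ci*y + dr)) (Rle_0_sqr (cr*y + ci*x + di)); unfold Rsqr; lra.
Qed.

Ltac from H := match type of H with ?L = _ => transitivity L; [ring | exact H] end.
Ltac hom2 m Hm2 := match goal with |- ?L = ?R =>
  let F := eval pattern m in L in
  match F with ?f _ => transitivity (m*m * f 1); [cbv beta; ring | rewrite Hm2; cbv beta] end end.

Ltac evenm m Hm2 D := match goal with |- ?L = ?R =>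
  let F := eval pattern m in (L - R) in
  match F with ?f _ =>
    apply (lincomb L R (m*m*((f 2 - f 1)/3) + (4*f 1 - f 2)/3));
    [cbv beta; field; repeat split; lra
    | rewrite Hm2; cbv beta; unfold D; field; repeat split; first [lra | apply Rgt_not_eq; assumption]] end end.
Theorem mainTheorem3 (sigma : M2) (z : Cx) (lambda : R) :
  in_SL2C sigma -> 0 < lambda ->
  let g := M2mul (nmat z) (amat lambda) in
  let P := hpoint z lambda in
  (exists w mu K, iwasawa (M2mul sigma g) w mu K) /\
  (forall w mu K, iwasawa (M2mul sigma g) w mu K ->
     is_R sigma P (mat3_mul Bmat (mat3_mul (Phi K) Bmat))).
Proof.
  intros Hdet Hl g P. subst g P.
  destruct sigma as [[ar ai] [br bi] [cr ci] [dr di]]. destruct z as [x y].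
  unfold in_SL2C, M2det in Hdet. simpl in Hdet. injection Hdet as Hdr Hdi.
  assert (HDr : ar*dr - ai*di - (br*cr - bi*ci) = 1) by lra.
  assert (HDi : ar*di + ai*dr - (br*ci + bi*cr) = 0) by lra.
  clear Hdr Hdi.
  assert (Hs : 0 < sqrt lambda) by (apply sqrt_lt_R0; lra).
  assert (Hls : lambda = sqrt lambda * sqrt lambda) by (rewrite sqrt_sqrt; lra).
  set (s := sqrt lambda) in *. clearbody s. subst lambda.
  unfold amat at 1. rewrite sqrt_square by lra.
  split.
  - pose proof (den_pos ar ai br bi cr ci dr di x y s HDr HDi Hs) as HD.
    set (D := (cr*x - ci*y + dr)*(cr*x - ci*y + dr) + (cr*y + ci*x + di)*(cr*y + ci*x + di) + (cr*cr+ci*ci)*((s*s)*(s*s))) in *.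
    assert (Hmu : 0 < s*s/D) by (apply Rdiv_lt_0_compat; lra).
    assert (Hm : 0 < sqrt (s*s/D)) by (apply sqrt_lt_R0; lra).
    assert (Hm2 : sqrt (s*s/D) * sqrt (s*s/D) = s*s/D) by (apply sqrt_sqrt; lra).
    set (ur := cr*x - ci*y + dr). set (ui := cr*y + ci*x + di).
    set (vr := ar*x - ai*y + br). set (vi := ar*y + ai*x + bi).
    exists (mkC ((vr*ur + vi*ui + (s*s)*(s*s)*(ar*cr + ai*ci))/D) ((vi*ur - vr*ui + (s*s)*(s*s)*(ai*cr - ar*ci))/D)).
    exists (s*s/D).
    exists (mkM2 (mkC (sqrt (s*s/D)*(ur/s)) (- (sqrt (s*s/D)*(ui/s))))
                 (mkC (- (sqrt (s*s/D)*(s*cr))) (sqrt (s*s/D)*(s*ci)))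
                 (mkC (sqrt (s*s/D)*(s*cr)) (sqrt (s*s/D)*(s*ci)))
                 (mkC (sqrt (s*s/D)*(ur/s)) (sqrt (s*s/D)*(ui/s)))).
    unfold iwasawa, in_SU2, M2det, amat.
    set (m := sqrt (s*s/D)) in *. clearbody m. subst ur ui vr vi.
    unfold M2mul, M2adj, M2id, nmat, Cadd, Cmul, Copp, Cconj, Defs.C1, Defs.C0, Defs.CR; simpl.
    split; [exact Hmu|]. split; [split|].
    + cbv [Defs.C1 Defs.C0 Defs.CR]. f_equal; f_equal.
      all: evenm m Hm2 D.
    + cbv [Defs.C1 Defs.C0 Defs.CR]. f_equal. all: evenm m Hm2 D.
    + f_equal; f_equal.
      * apply (lincomb _ _ ((s*s/D)/s * ((cr*x - ci*y + dr)*(ar*dr - ai*di - (br*cr - bi*ci) - 1) + (cr*y + ci*x + di)*(ar*di + ai*dr - (br*ci + bi*cr))))).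
        -- evenm m Hm2 D.
        -- rewrite HDr, HDi. ring.
      * apply (lincomb _ _ ((s*s/D)/s * ((cr*x - ci*y + dr)*(ar*di + ai*dr - (br*ci + bi*cr)) - (cr*y + ci*x + di)*(ar*dr - ai*di - (br*cr - bi*ci) - 1)))).
        -- evenm m Hm2 D.
        -- rewrite HDr, HDi. ring.
      * apply (lincomb _ _ (- (s*s/D)*s*(cr*(ar*dr - ai*di - (br*cr - bi*ci) - 1) + ci*(ar*di + ai*dr - (br*ci + bi*cr))))).
        -- evenm m Hm2 D.
        -- rewrite HDr, HDi. ring.
      * apply (lincomb _ _ (- (s*s/D)*s*(cr*(ar*di + ai*dr - (br*ci + bi*cr)) - ci*(ar*dr - ai*di - (br*cr - bi*ci) - 1)))).
        -- evenm m Hm2 D.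
        -- rewrite HDr, HDi. ring.
      * evenm m Hm2 D.
      * evenm m Hm2 D.
      * evenm m Hm2 D.
      * evenm m Hm2 D.
  - intros w mu K [Hmu [[HKK HKd] Heq]].
    destruct K as [[k1 k2] [k3 k4] [k5 k6] [k7 k8]].
    assert (Hm : 0 < sqrt mu) by (apply sqrt_lt_R0; lra).
    assert (Hmu2 : mu = sqrt mu * sqrt mu) by (rewrite sqrt_sqrt; lra).
    unfold amat in Heq. set (m := sqrt mu) in *. clearbody m. subst mu.
    assert (Hc := f_equal mc Heq). assert (Hd := f_equal md Heq).
    clear Heq. simpl in Hc, Hd.
    injection Hc as Hc1 Hc2. injection Hd as Hd1 Hd2.
    unfold M2mul, M2adj, M2id in HKK. simpl in HKK.
    injection HKK as K1 K2 K3 K4 K5 K6 K7 K8.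
    unfold M2det in HKd; simpl in HKd. injection HKd as Kd1 Kd2.
    rewrite sqrt_square in Hc1, Hc2, Hd1, Hd2 by lra.
    assert (Hk5 : k5 = m*(s*cr)).
    { match type of Hc1 with _ = ?R => assert (E: k5 = m*R) by (field; lra) end. rewrite <- Hc1 in E. rewrite E. ring. }
    assert (Hk6 : k6 = m*(s*ci)).
    { match type of Hc2 with _ = ?R => assert (E: k6 = m*R) by (field; lra) end. rewrite <- Hc2 in E. rewrite E. ring. }
    assert (Hk7 : k7 = m*((cr*x - ci*y + dr)/s)).
    { match type of Hd1 with _ = ?R => assert (E: k7 = m*R) by (field; lra) end. rewrite <- Hd1 in E. rewrite E. field. lra. }
    assert (Hk8 : k8 = m*((cr*y + ci*x + di)/s)).
    { match type of Hd2 with _ = ?R => assert (E: k8 = m*R) by (field; lra) end. rewrite <- Hd2 in E. rewrite E. field. lra. }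
    destruct (su2_struct k1 k2 k3 k4 k5 k6 k7 k8) as [Hk1 [Hk2 [Hk3 Hk4]]];
      [from K1 | from K5 | from K6 | from Kd1 | from Kd2 |].
    assert (HN : k5*k5+k6*k6+k7*k7+k8*k8 = 1) by from K7.
    clear K1 K2 K3 K4 K5 K6 K7 K8 Kd1 Kd2 Hc1 Hc2 Hd1 Hd2.
    pose proof (den_pos ar ai br bi cr ci dr di x y s HDr HDi Hs) as HD.
    set (D := (cr*x - ci*y + dr)*(cr*x - ci*y + dr) + (cr*y + ci*x + di)*(cr*y + ci*x + di) + (cr*cr+ci*ci)*((s*s)*(s*s))) in *.
    assert (Hm2 : m*m = s*s/D).
    { rewrite Hk5, Hk6, Hk7, Hk8 in HN.
      assert (H1 : m*m*D = s*s).
      { match type of HN with ?L = _ => transitivity (s*s*L); [unfold D; field; lra | rewrite HN; ring] end. }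
      rewrite <- H1. field. lra. }
    subst k1 k2 k3 k4. subst k5 k6 k7 k8.
    unfold is_R, hpoint; simpl.
    exists (let ur := cr*x - ci*y + dr in let ui := cr*y + ci*x + di in let l := s*s in
      fun i j => match i, j with
      | 0%nat, 0%nat => (ur*ur-ui*ui-l*l*(cr*cr-ci*ci))/(D*D)
      | 0%nat, 1%nat => (2*ur*ui+2*l*l*cr*ci)/(D*D)
      | 0%nat, 2%nat => (2*l*(ur*cr-ui*ci))/(D*D)
      | 1%nat, 0%nat => (-2*ur*ui+2*l*l*cr*ci)/(D*D)
      | 1%nat, 1%nat => (ur*ur-ui*ui+l*l*(cr*cr-ci*ci))/(D*D)
      | 1%nat, 2%nat => (-2*l*(ur*ci+ui*cr))/(D*D)
      | 2%nat, 0%nat => (-2*l*(ur*cr+ui*ci))/(D*D)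
      | 2%nat, 1%nat => (2*l*(ur*ci-ui*cr))/(D*D)
      | 2%nat, 2%nat => (ur*ur+ui*ui-l*l*(cr*cr+ci*ci))/(D*D)
      | _, _ => 0 end).
    assert (HD' : D <> 0) by lra.
    split.
    + apply is_diff_from3.
      * apply (deriv1 ar ai br bi cr ci dr di x y (s*s) HDr HDi HD').
      * apply (deriv2 ar ai br bi cr ci dr di x y (s*s) HDr HDi HD').
      * apply (deriv3 ar ai br bi cr ci dr di x y (s*s) HD').
    + intros i j Hi Hj.
      destruct i as [|[|[|i]]]; [| | | lia]; destruct j as [|[|[|j]]]; try lia;
      unfold mat3_mul, Bmat, Phi, Imh; simpl;
      unfold act, Cnorm2, Cadd, Cmul, Cconj, Cscal; simpl.
      all: hom2 m Hm2.
      all: unfold D; field.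
      all: split; [exact HD' | lra].
Qed.
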